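(* Let $\xi=e^{i\pi/5}\in\mathbb{C}$, $\tau=\frac{1+\sqrt5}{2}$, $\tau'=\frac{1-\sqrt5}{2}$. For $n\in\mathbb{N}_0$ let $Q_2(n)=\{\sum_{j=0}^9 n_j\xi^j: n_j\in\mathbb{N}_0,\ \sum_j n_j\le n\}$ and $L(n)=Q_2(n)\cap\mathbb{R}$. Then $L(2)\setminus L(1)=\{\pm2,\pm\tau,\pm\tau'\}$.
   Context: $Q_2(n)$ is the $H_2^{\mathrm{aff}}$-induced quasicrystal fragment (all linear combinations of at most $n$ tenth roots of unity with nonnegative integer coefficients); $L(n)$ is its intersection with the real line, denoted $L_{\alpha_1}(n)$ in the paper. *)

(* Defs.v *)
From Stdlib Require Import Reals List.
From Coquelicot Require Import Coquelicot.
Open Scope R_scope.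

Definition xi : C := (cos (PI / 5), sin (PI / 5)).

Fixpoint Cpow (z : C) (k : nat) : C :=
  match k with O => 1%C | S k' => (z * Cpow z k')%C end.

Definition tau : R := (1 + sqrt 5) / 2.
Definition tau' : R := (1 - sqrt 5) / 2.

Definition Q2 (n : nat) (z : C) : Prop :=
  exists c : nat -> nat,
    Nat.le (fold_right Nat.add 0%nat (map c (seq 0 10))) n /\
    z = fold_right Cplus 0%C (map (fun j => (INR (c j) * Cpow xi j)%C) (seq 0 10)).

Definition L (n : nat) (z : C) : Prop := Q2 n z /\ Im z = 0.

(* Main.v *)
Require Import Defs.
From Stdlib Require Import Reals List Lra Lia Psatz.
From Coquelicot Require Import Coquelicot.
Open Scope R_scope.

Lemma tau_sq : tau * tau = tau + 1.
Proof. unfold tau. assert (H := sqrt_sqrt 5 ltac:(lra)). nra. Qed.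

Lemma tau_bounds : 1.6 < tau < 1.7.
Proof. unfold tau. assert (H := sqrt_sqrt 5 ltac:(lra)). assert (H0 := sqrt_pos 5). nra. Qed.

Definition a5 := PI / 5.

Lemma cos_a5 : cos a5 = tau / 2.
Proof.
  assert (Hp := PI_RGT_0).
  assert (Hc : 0 < cos a5) by (apply cos_gt_0; unfold a5; lra).
  assert (H3 : cos (2 * a5 + a5) = - cos (2 * a5)).
  { replace (2 * a5 + a5) with (PI - 2 * a5) by (unfold a5; field).
    rewrite cos_minus, cos_PI, sin_PI. ring. }
  rewrite cos_plus, sin_2a, cos_2a_cos in H3.
  assert (Hs := sin2 a5). unfold Rsqr in Hs.
  set (c := cos a5) in *. set (s := sin a5) in *.
  assert (Hq : 4*c*c - 2*c - 1 = 0).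
  { assert ((c+1)*(4*c*c-2*c-1) = 0) by nra.
    apply Rmult_integral in H. destruct H; [lra|exact H]. }
  unfold tau. assert (H := sqrt_sqrt 5 ltac:(lra)). assert (H0 := sqrt_pos 5).
  set (r := sqrt 5) in *.
  assert ((c - (1+r)/4) * (c - (1-r)/4) = 0) by nra.
  apply Rmult_integral in H1. destruct H1; nra.
Qed.
Lemma Cpow_xi k : Cpow xi k = (cos (INR k * a5), sin (INR k * a5)).
Proof.
  induction k as [|k IH].
  - simpl. rewrite Rmult_0_l, cos_0, sin_0. reflexivity.
  - simpl Cpow. rewrite IH. rewrite S_INR.
    replace ((INR k + 1) * a5) with (a5 + INR k * a5) by ring.
    rewrite cos_plus, sin_plus. unfold xi, Cmult. simpl. fold a5. f_equal; ring.
Qed.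

Definition s1 := sin a5.
Definition s2 := sin (2 * a5).

Lemma cos2 : cos (2 * a5) = (tau - 1) / 2.
Proof. rewrite cos_2a_cos, cos_a5. assert (H := tau_sq). nra. Qed.

Lemma shift5 j : INR (j + 5) * a5 = INR j * a5 + PI.
Proof. rewrite plus_INR. unfold a5. simpl. field. Qed.

Lemma v0 : Cpow xi 0 = (1, 0).
Proof. rewrite Cpow_xi. simpl. rewrite Rmult_0_l, cos_0, sin_0. reflexivity. Qed.
Lemma v1 : Cpow xi 1 = (tau/2, s1).
Proof. rewrite Cpow_xi. simpl. rewrite Rmult_1_l, cos_a5. reflexivity. Qed.
Lemma v2 : Cpow xi 2 = ((tau-1)/2, s2).
Proof. rewrite Cpow_xi. replace (INR 2) with 2 by (simpl; ring). rewrite cos2. reflexivity. Qed.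
Lemma v3 : Cpow xi 3 = (-((tau-1)/2), s2).
Proof. rewrite Cpow_xi. replace (INR 3 * a5) with (PI - 2 * a5) by (unfold a5; simpl; field).
  rewrite sin_PI_x, cos_minus, cos_PI, sin_PI, cos2. unfold s2. f_equal; ring. Qed.
Lemma v4 : Cpow xi 4 = (-(tau/2), s1).
Proof. rewrite Cpow_xi. replace (INR 4 * a5) with (PI - a5) by (unfold a5; simpl; field).
  rewrite sin_PI_x, cos_minus, cos_PI, sin_PI, cos_a5. unfold s1. f_equal; ring. Qed.
Lemma vS j x y : Cpow xi j = (x, y) -> Cpow xi (j+5) = (-x, -y).
Proof. rewrite !Cpow_xi, shift5, neg_cos, neg_sin. intro H. inversion H. reflexivity. Qed.
Lemma v5 : Cpow xi 5 = (-1, -0). Proof. exact (vS 0 _ _ v0). Qed.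
Lemma v6 : Cpow xi 6 = (-(tau/2), -s1). Proof. exact (vS 1 _ _ v1). Qed.
Lemma v7 : Cpow xi 7 = (-((tau-1)/2), -s2). Proof. exact (vS 2 _ _ v2). Qed.
Lemma v8 : Cpow xi 8 = (- -((tau-1)/2), -s2). Proof. exact (vS 3 _ _ v3). Qed.
Lemma v9 : Cpow xi 9 = (- -(tau/2), -s1). Proof. exact (vS 4 _ _ v4). Qed.

Lemma s_pos : 0 < s1 /\ s1 < s2.
Proof.
  assert (Hp := PI_RGT_0). unfold s1, s2.
  assert (0 < sin a5) by (apply sin_gt_0; unfold a5; lra).
  rewrite sin_2a, cos_a5. assert (H1 := tau_bounds). nra.
Qed.

Definition X (n : nat -> nat) := fold_right Cplus 0%C (map (fun j => (INR (n j) * Cpow xi j)%C) (seq 0 10)).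

Lemma Xform n : X n =
  (INR (n 0%nat) * 1 + INR (n 1%nat) * (tau/2) + INR (n 2%nat) * ((tau-1)/2) + INR (n 3%nat) * (-((tau-1)/2))
   + INR (n 4%nat) * (-(tau/2)) + INR (n 5%nat) * (-1) + INR (n 6%nat) * (-(tau/2)) + INR (n 7%nat) * (-((tau-1)/2))
   + INR (n 8%nat) * ((tau-1)/2) + INR (n 9%nat) * (tau/2),
   INR (n 1%nat) * s1 + INR (n 2%nat) * s2 + INR (n 3%nat) * s2 + INR (n 4%nat) * s1
   - INR (n 6%nat) * s1 - INR (n 7%nat) * s2 - INR (n 8%nat) * s2 - INR (n 9%nat) * s1).
Proof.
  unfold X. cbn [seq map fold_right].
  rewrite v0, v1, v2, v3, v4, v5, v6, v7, v8, v9.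
  unfold Cplus, Cmult, RtoC. simpl. f_equal; ring.
Qed.
Definition csum (c : nat -> nat) := fold_right Nat.add 0%nat (map c (seq 0 10)).

Lemma pair_eq2 (a b c d : R) : a = c -> b = d -> (a, b) = (c, d).
Proof. intros -> ->. reflexivity. Qed.

Ltac sd := first [ left; apply pair_eq2; lra | right; sd | apply pair_eq2; lra ].
Ltac dn i := destruct (i) as [|[|[|?]]]; simpl in *; try lia.

Lemma enum2 c : (csum c <= 2)%nat -> Im (X c) = 0 ->
  X c = RtoC 0 \/ X c = RtoC 1 \/ X c = RtoC (-1) \/ X c = RtoC 2 \/ X c = RtoC (-2) \/
  X c = RtoC tau \/ X c = RtoC (-tau) \/ X c = RtoC (tau - 1) \/ X c = RtoC (1 - tau).
Proof.
  unfold csum. rewrite Xform. unfold Im, RtoC. cbn [fst snd seq map fold_right].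
  assert (Hs := s_pos). assert (Ht := tau_bounds). intros Hc HI.
  dn (c 0%nat); dn (c 1%nat); dn (c 2%nat); dn (c 3%nat); dn (c 4%nat);
  dn (c 5%nat); dn (c 6%nat); dn (c 7%nat); dn (c 8%nat); dn (c 9%nat);
  first [exfalso; lra | sd].
Qed.

Lemma enum1 c : (csum c <= 1)%nat -> Im (X c) = 0 ->
  X c = RtoC 0 \/ X c = RtoC 1 \/ X c = RtoC (-1).
Proof.
  unfold csum. rewrite Xform. unfold Im, RtoC. cbn [fst snd seq map fold_right].
  assert (Hs := s_pos). assert (Ht := tau_bounds). intros Hc HI.
  dn (c 0%nat); dn (c 1%nat); dn (c 2%nat); dn (c 3%nat); dn (c 4%nat);
  dn (c 5%nat); dn (c 6%nat); dn (c 7%nat); dn (c 8%nat); dn (c 9%nat);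
  first [exfalso; lra | sd].
Qed.

Lemma L1_0 : L 1 (RtoC 0).
Proof. split; [|reflexivity]. exists (fun _ => 0%nat). split; [simpl; lia|].
  change (RtoC 0 = X (fun _ => 0%nat)). rewrite Xform. cbn [INR]. unfold RtoC. apply pair_eq2; lra. Qed.
Lemma L1_1 : L 1 (RtoC 1).
Proof. split; [|reflexivity]. exists (fun j => match j with 0 => 1 | _ => 0 end%nat). split; [simpl; lia|].
  change (RtoC 1 = X (fun j => match j with 0 => 1 | _ => 0 end%nat)). rewrite Xform. cbn [INR]. unfold RtoC. apply pair_eq2; lra. Qed.
Lemma L1_m1 : L 1 (RtoC (-1)).
Proof. split; [|reflexivity]. exists (fun j => match j with 5 => 1 | _ => 0 end%nat). split; [simpl; lia|].
  change (RtoC (-1) = X (fun j => match j with 5 => 1 | _ => 0 end%nat)). rewrite Xform. cbn [INR]. unfold RtoC. apply pair_eq2; lra. Qed.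

Lemma L2_of (c : nat -> nat) v : csum c = 2%nat -> X c = RtoC v -> L 2 (RtoC v).
Proof. intros Hc Hx. split; [|reflexivity]. exists c. split; [unfold csum in Hc; lia|]. rewrite <- Hx. reflexivity. Qed.

Lemma tau'_eq : tau' = 1 - tau.
Proof. unfold tau', tau. field. Qed.

Theorem proposition6p3 : forall z : C,
  (L 2 z /\ ~ L 1 z) <->
  (z = RtoC 2 \/ z = RtoC (-2) \/ z = RtoC tau \/ z = RtoC (- tau) \/
   z = RtoC tau' \/ z = RtoC (- tau')).
Proof.
  intro z. rewrite tau'_eq. replace (- (1 - tau)) with (tau - 1) by ring. split.
  - intros [[[c [Hs Hz]] HI] HN]. change (z = X c) in Hz. subst z.
    destruct (enum2 c Hs HI) as [H|[H|[H|[H|[H|[H|[H|[H|H]]]]]]]]; rewrite H in *;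
    try (exfalso; apply HN; first [apply L1_0 | apply L1_1 | apply L1_m1]); tauto.
  - assert (Ht := tau_bounds).
    assert (Hne : forall v, L 1 (RtoC v) -> v = 0 \/ v = 1 \/ v = -1).
    { intros v [[c [Hs Hz]] HI]. change (RtoC v = X c) in Hz. rewrite Hz in HI.
      destruct (enum1 c Hs HI) as [H|[H|H]]; rewrite H in Hz; injection Hz; intros; [left|right;left|right;right]; lra. }
    intros [H|[H|[H|[H|[H|H]]]]]; subst z; split;
      try (intro HL; apply Hne in HL; lra).
    + apply (L2_of (fun j => match j with 0 => 2 | _ => 0 end%nat)); [reflexivity|].
      rewrite Xform. cbn [INR]. unfold RtoC. apply pair_eq2; lra.
    + apply (L2_of (fun j => match j with 5 => 2 | _ => 0 end%nat)); [reflexivity|].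
      rewrite Xform. cbn [INR]. unfold RtoC. apply pair_eq2; lra.
    + apply (L2_of (fun j => match j with 1 | 9 => 1 | _ => 0 end%nat)); [reflexivity|].
      rewrite Xform. cbn [INR]. unfold RtoC. apply pair_eq2; lra.
    + apply (L2_of (fun j => match j with 4 | 6 => 1 | _ => 0 end%nat)); [reflexivity|].
      rewrite Xform. cbn [INR]. unfold RtoC. apply pair_eq2; lra.
    + apply (L2_of (fun j => match j with 3 | 7 => 1 | _ => 0 end%nat)); [reflexivity|].
      rewrite Xform. cbn [INR]. unfold RtoC. apply pair_eq2; lra.
    + apply (L2_of (fun j => match j with 2 | 8 => 1 | _ => 0 end%nat)); [reflexivity|].
      rewrite Xform. cbn [INR]. unfold RtoC. apply pair_eq2; lra.
Qed.
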